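(* For a positive integer $n$ let \[ A_n:=\sum_{k=0}^{n-1}(-1)^{n-1-k}\binom{2k}{k}^5(205k^2+160k+32). \] Then \[ A_n=16n\binom{2n}{n}\sum_{k=0}^{n-1}\binom{n+k-1}{k}^4(2k+n) \quad\text{and}\quad A_n=8n^2\binom{2n}{n}^2\sum_{k=0}^{n-1}(-1)^k\binom{2n-1}{n+k}\binom{2n-k-2}{n-k-1}^2 . \] *)

(* Defs.v *)
From mathcomp Require Import all_boot all_algebra.
Set Implicit Arguments. Unset Strict Implicit. Unset Printing Implicit Defensive.
Import GRing.Theory Num.Theory.
Local Open Scope ring_scope.

Definition A (n : nat) : int :=
  \sum_(0 <= k < n) (-1) ^+ (n - 1 - k)%N * ('C(2 * k, k) ^ 5)%:R
     * (205 * k ^ 2 + 160 * k + 32)%:R.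

(* Main.v *)
Require Import Defs.
From mathcomp Require Import all_boot all_algebra.
From mathcomp Require Import ring lra zify.
Import GRing.Theory Num.Theory.
Local Open Scope ring_scope.

Lemma natr_div (a b x y : nat) : (a * x = b * y)%N -> a != 0%N ->
  (x%:R : rat) = b%:R * y%:R / a%:R.
Proof.
move=> h ha; rewrite -natrM -h natrM mulrAC divff ?mul1r //.
by rewrite pnatr_eq0.
Qed.

Definition F1 (m k : nat) : nat := ('C(m + k, k) ^ 4 * (2 * k + m + 1))%N.
Definition T1 (m k : nat) : nat :=
  (32 * (2 * m + 3) * F1 m.+1 k + 16 * (m + 1) * F1 m k)%N.
Definition G1 (m k : nat) : nat :=
  match k with 0 => 0%N
  | k'.+1 => (16 * 'C(m + 1 + k', k') ^ 4 *
      (2 * k'.+1 ^ 2 + 6 * (m + 1) * k'.+1 + 5 * (m + 1) ^ 2))%N end.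

Lemma G1_step m k : G1 m k.+1 = (G1 m k + T1 m k)%N.
Proof.
case: k => [|k].
  rewrite /G1 /T1 /F1 !addn0 !bin0; ring.
rewrite /G1 /T1 /F1.
have eY : ('C(m.+1 + k.+1, k.+1)%:R : rat) = (m + k + 2)%:R * 'C(m + 1 + k, k)%:R / (k.+1)%:R.
  apply: natr_div => //.
  have := mul_bin_diag (m + k + 2) k.
  rewrite (_ : (m + k + 2).-1 = m + 1 + k)%N; last by lia.
  rewrite (_ : (m.+1 + k.+1 = m + k + 2)%N); last by lia.
  by move=> ->.
have eY' : ('C(m + 1 + k.+1, k.+1)%:R : rat) = (m + k + 2)%:R * 'C(m + 1 + k, k)%:R / (k.+1)%:R.
  by rewrite -eY (_ : (m + 1 = m.+1)%N) //; lia.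
have eZ : ('C(m + k.+1, k.+1)%:R : rat) = (m + 1)%:R * 'C(m + 1 + k, k)%:R / (k.+1)%:R.
  apply: natr_div => //.
  have := mul_bin_left (m + 1 + k) k.
  rewrite (_ : (m + 1 + k - k = m + 1)%N); last by lia.
  by rewrite (_ : (m + k.+1 = m + 1 + k)%N) //; lia.
apply/eqP; rewrite -(eqr_nat rat) !natrD !natrM eY eY' eZ; apply/eqP.
field; by rewrite addrC natr1 pnatr_eq0.
Qed.

Lemma G1_sum m N : (\sum_(0 <= k < N) T1 m k)%N = G1 m N.
Proof.
elim: N => [|N IH]; first by rewrite big_nil.
by rewrite big_nat_recr // IH G1_step.
Qed.

Lemma binmid m : 'C((2 * m + 1).+1, m.+1) = (2 * 'C(2 * m + 1, m.+1))%N.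
Proof.
have hm : (m <= 2 * m + 1)%N by lia.
have e : (2 * m + 1 - m = m.+1)%N by lia.
rewrite binS -(bin_sub hm) e.
lia.
Qed.

Definition S1 (m : nat) : nat := (\sum_(0 <= k < m.+1) F1 m k)%N.

Lemma rec1 m : (32 * (2 * m + 3) * S1 m.+1 + 16 * (m + 1) * S1 m)%N =
  ('C((2 * m + 1).+1, m.+1) ^ 4 * (205 * (m + 1) ^ 2 + 160 * (m + 1) + 32))%N.
Proof.
have := G1_sum m m.+2.
rewrite /T1 big_split -!big_distrr /=.
rewrite [X in (_ + _ * X)%N]big_nat_recr //= => h.
have e1 : (m + m.+1 = 2 * m + 1)%N by lia.
have e2 : (m + 1 + m.+1 = (2 * m + 1).+1)%N by lia.
have eF : F1 m m.+1 = ('C(2 * m + 1, m.+1) ^ 4 * (3 * m + 3))%N.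
  rewrite /F1 e1; ring.
rewrite eF e2 binmid in h.
rewrite /S1 binmid.
move: h; set s1 := (\sum_(0 <= i < m.+2) F1 m.+1 i)%N.
set s0 := (\sum_(0 <= i < m.+1) F1 m i)%N.
set c := 'C(2 * m + 1, m.+1) => h.
apply/(@addIn (16 * (m + 1) * (c ^ 4 * (3 * m + 3)))%N).
rewrite (_ : (32 * (2 * m + 3) * s1 + 16 * (m + 1) * s0 + 16 * (m + 1) * (c ^ 4 * (3 * m + 3)))%N
  = (32 * (2 * m + 3) * s1 + 16 * (m + 1) * (s0 + c ^ 4 * (3 * m + 3)))%N); last by ring.
rewrite h; ring.
Qed.

Definition g2 (m j : nat) : nat := ('C(2 * m + 2, j) * 'C(m + 1 + j, j) ^ 2 *
   (120 * (m + 1) ^ 2 + 44 * (m + 1) + (84 * (m + 1) + 32) * (j + 1)))%N.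
Definition t0 (m j : nat) : nat := ('C(2 * m + 1, j) * 'C(m + j, j) ^ 2)%N.

Lemma g2_base m : (g2 m 0 + 8 * (m + 1) ^ 2 = 32 * (2 * m + 3) ^ 2 * t0 m.+1 0)%N.
Proof. rewrite /g2 /t0 !bin0; ring. Qed.

Lemma g2_step m j : (j <= m)%N ->
  (g2 m j.+1 + g2 m j + 8 * (m + 1) ^ 2 * t0 m j.+1 =
   32 * (2 * m + 3) ^ 2 * t0 m.+1 j.+1)%N.
Proof.
move=> hjm; have [r hr] : exists r, m = (j + r)%N by exists (m - j)%N; lia.
rewrite /g2 /t0.
have eB1 : ('C(m + 1 + j.+1, j.+1)%:R : rat) = (m + j + 2)%:R * 'C(m + 1 + j, j)%:R / (j.+1)%:R.
  apply: natr_div => //.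
  have := mul_bin_diag (m + j + 2) j.
  rewrite (_ : (m + j + 2).-1 = m + 1 + j)%N; last by lia.
  rewrite (_ : (m + 1 + j.+1 = m + j + 2)%N); last by lia.
  by move=> ->.
have eB1' : ('C(m.+1 + j.+1, j.+1)%:R : rat) = (m + j + 2)%:R * 'C(m + 1 + j, j)%:R / (j.+1)%:R.
  by rewrite -eB1 (_ : (m + 1 = m.+1)%N) //; lia.
have eB' : ('C(m + j.+1, j.+1)%:R : rat) = (m + 1)%:R * 'C(m + 1 + j, j)%:R / (j.+1)%:R.
  apply: natr_div => //.
  have := mul_bin_left (m + 1 + j) j.
  rewrite (_ : (m + 1 + j - j = m + 1)%N); last by lia.
  by rewrite (_ : (m + j.+1 = m + 1 + j)%N) //; lia.
have eA1 : ('C(2 * m + 2, j.+1)%:R : rat) = (j + 2 * r + 2)%:R * 'C(2 * m + 2, j)%:R / (j.+1)%:R.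
  apply: natr_div => //.
  have := mul_bin_left (2 * m + 2) j.
  by rewrite (_ : (2 * m + 2 - j = j + 2 * r + 2)%N) //; lia.
have eD : ('C(2 * m.+1 + 1, j.+1)%:R : rat) = (2 * m + 3)%:R * 'C(2 * m + 2, j.+1)%:R / (j + 2 * r + 2)%:R.
  apply: natr_div; last by rewrite addn2.
  have := mul_bin_down (2 * m + 3) j.+1.
  rewrite (_ : (2 * m + 3).-1 = 2 * m + 2)%N; last by lia.
  rewrite (_ : (2 * m + 3 - j.+1 = j + 2 * r + 2)%N); last by lia.
  by rewrite (_ : (2 * m.+1 + 1 = 2 * m + 3)%N) //; lia.
have eE : ('C(2 * m + 1, j.+1)%:R : rat) = (j + 2 * r + 1)%:R * 'C(2 * m + 2, j.+1)%:R / (2 * m + 2)%:R.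
  apply: natr_div; last by rewrite addn2.
  have := mul_bin_down (2 * m + 2) j.+1.
  rewrite (_ : (2 * m + 2).-1 = 2 * m + 1)%N; last by lia.
  by rewrite (_ : (2 * m + 2 - j.+1 = j + 2 * r + 1)%N) //; lia.
apply/eqP; rewrite -(eqr_nat rat) !natrD !natrM.
rewrite eD eE eB1 eB1' eB' eA1.
apply/eqP; subst m.
have hj : 0 <= (j%:R : rat) := ler0n _ _.
have hr0 : 0 <= (r%:R : rat) := ler0n _ _.
field; apply/and3P; split; apply: lt0r_neq0; lra.
Qed.

Definition Up (m : nat) : int := \sum_(0 <= j < m.+1) (-1) ^+ j * (t0 m j)%:R.
Definition Tp (m j : nat) : int :=
  - (32 * (2 * m + 3) ^ 2)%:R * ((-1) ^+ j * (t0 m.+1 j)%:R)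
  + (8 * (m + 1) ^ 2)%:R * ((-1) ^+ j * (t0 m j)%:R).

Lemma Tsum m J : (J <= m.+1)%N ->
  \sum_(0 <= j < J.+1) Tp m j = - ((-1) ^+ J * (g2 m J)%:R).
Proof.
elim: J => [|J IH] hJ.
  rewrite big_nat1 /Tp expr0 !mul1r.
  have := g2_base m; rewrite /t0 !bin0 muln1 => h.
  rewrite -h natrD; ring.
rewrite (big_nat_recr J.+1) // IH; last by lia.
have hJm : (J <= m)%N by lia.
have h := @g2_step m J hJm.
have h' := congr1 (fun x : nat => x%:R : int) h.
rewrite /= !natrD !natrM in h'.
rewrite /Tp exprS !natrM /=.
set s := (-1) ^+ J.
have h'' := congr1 (fun x => s * x) h'.
rewrite /= in h''.
lra.
Qed.

Lemma g2_top m : (g2 m m.+1 + 8 * (m + 1) ^ 2 * t0 m m.+1 =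
  'C((2 * m + 1).+1, m.+1) ^ 3 * (205 * (m + 1) ^ 2 + 160 * (m + 1) + 32))%N.
Proof.
rewrite /g2 /t0.
have e1 : (2 * m + 2 = (2 * m + 1).+1)%N by lia.
have e2 : (m + 1 + m.+1 = (2 * m + 1).+1)%N by lia.
have e3 : (m + m.+1 = 2 * m + 1)%N by lia.
rewrite e1 e2 e3 binmid; ring.
Qed.

Lemma recU m : - (32 * (2 * m + 3) ^ 2)%:R * Up m.+1 + (8 * (m + 1) ^ 2)%:R * Up m
  = (-1) ^+ m * ('C((2 * m + 1).+1, m.+1) ^ 3 *
       (205 * (m + 1) ^ 2 + 160 * (m + 1) + 32))%:R.
Proof.
have := @Tsum m m.+1 (leqnn m.+1).
rewrite /Tp big_split /= -!big_distrr /=.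
rewrite [X in _ + _ * X = _]big_nat_recr //= => h.
rewrite -g2_top /Up natrD.
move: h; rewrite exprS.
set s := (-1) ^+ m => h.
lra.
Qed.

Lemma sign_sub m k : (k <= m)%N -> (-1) ^+ (m - k) = (-1) ^+ m * (-1) ^+ k :> int.
Proof.
move=> hk.
have sk : (-1) ^+ k * (-1) ^+ k = 1 :> int by rewrite -exprMn mulrNN mulr1 expr1n.
by rewrite -{2}(subnK hk) exprD -mulrA sk mulr1.
Qed.

Lemma Ushift m : \sum_(0 <= k < m.+1) (-1) ^+ k *
   ('C(2 * m.+1 - 1, m.+1 + k) * 'C(2 * m.+1 - k - 2, m.+1 - k - 1) ^ 2)%:R
  = (-1) ^+ m * Up m.
Proof.
rewrite big_nat_rev /Up big_distrr; apply: eq_big_nat => k /andP[_ hk].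
rewrite add0n subSS.
have hkm : (k <= m)%N by lia.
have e1 : (2 * m.+1 - 1 = 2 * m + 1)%N by lia.
have e2 : (m.+1 + (m - k) = 2 * m + 1 - k)%N by lia.
have e3 : (2 * m.+1 - (m - k) - 2 = m + k)%N by lia.
have e4 : (m.+1 - (m - k) - 1 = k)%N by lia.
have hk2 : (k <= 2 * m + 1)%N by lia.
by rewrite e1 e2 e3 e4 bin_sub // sign_sub // /t0 /= mulrA.
Qed.

Lemma A_rec n : A n.+1 = ('C(2 * n, n) ^ 5)%:R * (205 * n ^ 2 + 160 * n + 32)%:R - A n.
Proof.
rewrite /A big_nat_recr //.
rewrite (_ : (n.+1 - 1 - n = 0)%N); last by lia.
rewrite expr0 mul1r addrC -sumrN; congr (_ + _).
apply: eq_big_nat => k /andP[_ hk].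
rewrite (_ : (n.+1 - 1 - k = (n - 1 - k).+1)%N); last by lia.
by rewrite exprS !mulN1r !mulNr.
Qed.

Lemma bin_ctr m : (m.+2 * 'C(2 * m.+2, m.+2) = 2 * (2 * m + 3) * 'C(2 * m.+1, m.+1))%N.
Proof.
have := binmid m.+1.
rewrite (_ : ((2 * m.+1 + 1).+1 = 2 * m.+2)%N); last by lia.
move=> ->.
have := mul_bin_diag (2 * m + 3) m.+1.
rewrite (_ : ((2 * m + 3).-1 = 2 * m.+1)%N); last by lia.
rewrite (_ : (2 * m.+1 + 1 = 2 * m + 3)%N); last by lia.
move=> h; rewrite mulnCA -h; ring.
Qed.

Definition R1 (m : nat) : int := ((16 * m.+1 * 'C(2 * m.+1, m.+1) * S1 m)%N)%:R.

Lemma R1E m : 16%:R * m.+1%:R * ('C(2 * m.+1, m.+1))%:R *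
   \sum_(0 <= k < m.+1) (('C(m.+1 + k - 1, k) ^ 4 * (2 * k + m.+1))%N)%:R = R1 m.
Proof.
rewrite /R1 -natr_sum -!natrM /S1; congr (_ * _)%:R.
apply: eq_big_nat => k _; rewrite /F1.
rewrite (_ : (m.+1 + k - 1 = m + k)%N); last by lia.
by rewrite (_ : (2 * k + m.+1 = 2 * k + m + 1)%N) //; lia.
Qed.

Lemma part1 m : A m.+1 = R1 m.
Proof.
elim: m => [|m IH].
  by rewrite A_rec /A big_nil /R1 /S1 big_nat1 /F1.
rewrite A_rec IH /R1.
apply/eqP; rewrite subr_eq -natrM -natrD eqr_nat; apply/eqP.
rewrite (_ : (16 * m.+2 * 'C(2 * m.+2, m.+2) * S1 m.+1 =
   16 * (m.+2 * 'C(2 * m.+2, m.+2)) * S1 m.+1)%N); last by ring.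
rewrite bin_ctr (_ : (2 * m.+1 = (2 * m + 1).+1)%N); last by lia.
rewrite (_ : (16 * (2 * (2 * m + 3) * 'C((2 * m + 1).+1, m.+1)) * S1 m.+1 +
   16 * m.+1 * 'C((2 * m + 1).+1, m.+1) * S1 m =
   'C((2 * m + 1).+1, m.+1) * (32 * (2 * m + 3) * S1 m.+1 + 16 * (m + 1) * S1 m))%N); last by ring.
rewrite rec1; ring.
Qed.

Definition R2 (m : nat) : int :=
  ((8 * m.+1 ^ 2 * 'C(2 * m.+1, m.+1) ^ 2)%N)%:R * ((-1) ^+ m * Up m).

Lemma R2E m : 8%:R * (m.+1 ^ 2)%:R * (('C(2 * m.+1, m.+1)) ^ 2)%:R *
  \sum_(0 <= k < m.+1) (-1) ^+ k
     * ('C(2 * m.+1 - 1, m.+1 + k) * 'C(2 * m.+1 - k - 2, m.+1 - k - 1) ^ 2)%:R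
  = R2 m.
Proof. by rewrite Ushift /R2 -!natrM. Qed.

Lemma part2 m : A m.+1 = R2 m.
Proof.
elim: m => [|m IH].
  by rewrite A_rec /A big_nil /R2 /Up big_nat1 /t0.
rewrite A_rec IH /R2.
rewrite (_ : (8 * m.+2 ^ 2 * 'C(2 * m.+2, m.+2) ^ 2 =
   8 * (m.+2 * 'C(2 * m.+2, m.+2)) ^ 2)%N); last by ring.
rewrite bin_ctr (_ : (2 * m.+1 = (2 * m + 1).+1)%N); last by lia.
have h := recU m.
set c := 'C((2 * m + 1).+1, m.+1) in h *.
rewrite exprS.
set s := (-1) ^+ m in h *.
have ss : s * s = 1 by rewrite /s -exprMn mulrNN mulr1 expr1n.
have h1 := congr1 (fun x => s * (c%:R) ^+ 2 * x) h.
have h2 := congr1 (fun x => x * (c ^ 5 * (205 * m.+1 ^ 2 + 160 * m.+1 + 32))%N%:R) ss.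
rewrite /= in h1 h2.
rewrite ?natrM ?natrX ?natrD in h1 h2 *.
lra.
Qed.

Theorem theorem7 (n : nat) (hn : (0 < n)%N) :
  A n = 16%:R * n%:R * ('C(2 * n, n))%:R *
          \sum_(0 <= k < n) (('C(n + k - 1, k) ^ 4 * (2 * k + n))%N)%:R
  /\
  A n = 8%:R * (n ^ 2)%:R * (('C(2 * n, n)) ^ 2)%:R *
          \sum_(0 <= k < n) (-1) ^+ k
             * ('C(2 * n - 1, n + k) * 'C(2 * n - k - 2, n - k - 1) ^ 2)%:R.
Proof.
case: n hn => // m _.
by rewrite R1E R2E; split; [apply: part1 | apply: part2].
Qed.
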